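(* Let $\mathbf{k}$ be a field, $p\ge3$ an integer, $S=\mathbf{k}[e_1,\dots,e_{2p}]$, $f_0=t^2+e_pt+e_{2p}$ and $f_i=e_it+e_{p+i}$ for $1\le i\le p-1$ in $S[t]$, and $I=\langle f_0,\dots,f_{p-1}\rangle\cap S$. Let $\varphi:S\to\mathbf{k}[u_1,\dots,u_p,\alpha]$ be the $\mathbf{k}$-algebra homomorphism with $\varphi(e_i)=u_i$ for $1\le i\le p-1$, $\varphi(e_p)=u_p+\alpha$, and $\varphi(e_i)=u_{i-p}\alpha$ for $p+1\le i\le 2p$. Then $I=\ker(\varphi)$. *)

(* Defs.v *)
From HB Require Import structures.
From mathcomp Require Import all_boot all_order all_algebra.
From mathcomp Require Import mpoly.
Set Implicit Arguments. Unset Strict Implicit. Unset Printing Implicit Defensive.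
Import GRing.Theory.
Local Open Scope ring_scope.

(* 1-indexed variables: var1 R n i = 'X_(i-1) in R[X_0..X_(n-1)], for 1 <= i <= n
   (and 0 outside that range, never used). *)
Definition var1 (R : ringType) (n i : nat) : {mpoly R[n]} :=
  match (insub i.-1 : option 'I_n) with Some j => 'X_j | None => 0 end.

Section Setup.
Variables (k : fieldType) (p : nat).

Definition S := {mpoly k[2 * p]}.
Definition e (i : nat) : S := var1 k (2 * p) i.

Definition f0 : {poly S} := 'X^2 + (e p)%:P * 'X + (e (2 * p))%:P.
Definition fi (i : nat) : {poly S} := (e i)%:P * 'X + (e (p + i))%:P.
Definition fam (i : 'I_p) : {poly S} := if val i == 0%N then f0 else fi i.

Definition inI (g : S) : Prop :=
  exists c : 'I_p -> {poly S}, g%:P = \sum_(i < p) c i * fam i.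

Definition T := {mpoly k[p.+1]}.
Definition u (i : nat) : T := var1 k p.+1 i.
Definition alpha : T := var1 k p.+1 p.+1.

Definition phi_img (j : 'I_(2 * p)) : T :=
  let i := j.+1 in
  if (i < p)%N then u i
  else if i == p then u p + alpha
  else u (i - p) * alpha.

Definition phi (g : S) : T := mmap (@mpolyC _ k) phi_img g.

End Setup.

(* Main.v *)
Require Import Defs.
From HB Require Import structures.
From mathcomp Require Import all_boot all_order all_algebra.
From mathcomp Require Import mpoly zify ring.
Import GRing.Theory.
Local Open Scope ring_scope.

Lemma var1E (R : ringType) n i (H : (i.-1 < n)%N) : var1 R n i = 'X_(Ordinal H).
Proof. by rewrite /var1 insubT. Qed.

Section X.
Variables (k : fieldType) (p : nat).
Hypothesis hp : (3 <= p)%N.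

Definition inJ (h : {poly S k p}) : Prop :=
  exists c : 'I_p -> {poly S k p}, h = \sum_(i < p) c i * fam k i.

Lemma inJ0 : inJ 0.
Proof. by exists (fun _ => 0); rewrite big1 // => i _; rewrite mul0r. Qed.

Lemma inJB a b : inJ a -> inJ b -> inJ (a - b).
Proof.
move=> [c ->] [d ->]; exists (fun i => c i - d i).
by rewrite -sumrB; apply: eq_bigr => i _; rewrite mulrBl.
Qed.

Lemma inJN a : inJ a -> inJ (- a).
Proof. by move=> h; rewrite -sub0r; apply: inJB => //; apply: inJ0. Qed.

Lemma inJD a b : inJ a -> inJ b -> inJ (a + b).
Proof. by move=> ha hb; rewrite -[b]opprK; apply: inJB => //; apply: inJN. Qed.

Lemma inJMl a b : inJ b -> inJ (a * b).
Proof.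
move=> [c ->]; exists (fun i => a * c i).
by rewrite mulr_sumr; apply: eq_bigr => i _; rewrite mulrA.
Qed.

Lemma inJMr a b : inJ a -> inJ (a * b).
Proof. by move=> h; rewrite mulrC; apply: inJMl. Qed.

Lemma inJfam i : inJ (fam k i).
Proof.
exists (fun j => if j == i then 1 else 0).
rewrite (bigD1 i) //= eqxx mul1r big1 ?addr0 // => j /negbTE ->; by rewrite mul0r.
Qed.

Definition cong a b := inJ (a - b).

Lemma congM a b c d : cong a b -> cong c d -> cong (a * c) (b * d).
Proof.
move=> h1 h2; rewrite /cong.
have -> : a * c - b * d = a * (c - d) + (a - b) * d by rewrite mulrBr mulrBl addrA subrK.
by apply: inJD; [apply: inJMl | apply: inJMr].
Qed.

Lemma congX a b n : cong a b -> cong (a ^+ n) (b ^+ n).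
Proof.
move=> h; elim: n => [|n IH]; first by rewrite /cong !expr0 subrr; apply: inJ0.
by rewrite !exprS; apply: congM.
Qed.

Definition cf : k -> {poly S k p} := polyC \o (@mpolyC _ k).

Definition chi_img (j : 'I_p.+1) : {poly S k p} :=
  let i := j.+1 in
  if (i < p)%N then (e k p i)%:P
  else if i == p then (e k p p)%:P + 'X
  else - 'X.

Definition chi (q : T k p) : {poly S k p} := mmap cf chi_img q.

Lemma chi_u i : (0 < i <= p)%N -> chi (u k p i) = if (i < p)%N then (e k p i)%:P else (e k p p)%:P + 'X.
Proof.
move=> /andP[i0 ip].
have H : (i.-1 < p.+1)%N by rewrite ltnS (leq_trans (leq_pred i)).
rewrite /u (@var1E _ _ _ H) /chi mmapX mmap1U /chi_img /= prednK //.
case: (ltngtP i p) => // H1; by rewrite ltnNge ip in H1.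
Qed.

Lemma chi_alpha : chi (alpha k p) = - 'X.
Proof.
have H : (p.+1.-1 < p.+1)%N by [].
rewrite /alpha (@var1E _ _ _ H) /chi mmapX mmap1U /chi_img /=.
by rewrite ltnNge leqnSn /= eqn_leq ltnn.
Qed.

Lemma key (j : 'I_(2 * p)) : cong (chi (phi_img k j)) ('X_j)%:P.
Proof.
have ej : 'X_j = e k p j.+1.
  by rewrite /e (@var1E _ _ j.+1 (ltn_ord j)); by congr (mpolyX _ _); apply: val_inj.
rewrite /phi_img /= ej /cong.
case: (ltngtP j.+1 p) => Hj.
- by rewrite chi_u ?Hj ?subrr ?(ltnW Hj) //; apply: inJ0.
- rewrite /chi rmorphM /= -!/(chi _) chi_alpha.
  have jp : (j.+1 <= 2 * p)%N := ltn_ord j.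
  have i0 : (0 < j.+1 - p <= p)%N.
    by rewrite subn_gt0 Hj /= leq_subLR addnn -mul2n.
  rewrite chi_u //.
  case: ltnP => Hi.
  + have -> : (e k p (j.+1 - p))%:P * - 'X - (e k p j.+1)%:P = - fam k (Ordinal Hi).
      rewrite /fam /= -[_ == 0%N]negbK -lt0n subn_gt0 Hj /fi subnKC ?(ltnW Hj) //.
      by rewrite opprD mulrN.
    by apply: inJN; apply: inJfam.
  + have ej2 : j.+1 = (2 * p)%N.
      move: Hi jp; set a := j.+1; lia.
    have p0 : (0 < p)%N by apply: leq_trans hp.
    have -> : ((e k p p)%:P + 'X) * - 'X - (e k p j.+1)%:P = - fam k (Ordinal p0).
      have ee : e k p j.+1 = e k p (2 * p) by apply: (congr1 (e k p) ej2).
      rewrite /fam /= /f0 ee mulrN mulrDl -expr2 !opprD.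
      by congr (_ - _); rewrite addrC.
    by apply: inJN; apply: inJfam.
- rewrite /chi rmorphD /= -!/(chi _) chi_alpha chi_u -?Hj ?ltnn ?leqnn //.
  by rewrite addrK Hj subrr; apply: inJ0.
Qed.


Lemma cong_prod (n : nat) (F G : 'I_n -> {poly S k p}) :
  (forall i, cong (F i) (G i)) -> cong (\prod_i F i) (\prod_i G i).
Proof.
move=> h; apply: (big_ind2 cong) => //.
  by rewrite /cong subrr; apply: inJ0.
by move=> ? ? ? ? ; apply: congM.
Qed.

Lemma congD a b c d : cong a b -> cong c d -> cong (a + c) (b + d).
Proof.
move=> h1 h2; rewrite /cong.
have -> : a + c - (b + d) = (a - b) + (c - d) by rewrite opprD addrACA.
exact: inJD.
Qed.

Lemma phiD (a b : S k p) : phi (a + b) = phi a + phi b.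
Proof. exact: rmorphD. Qed.
Lemma phiM (a b : S k p) : phi (a * b) = phi a * phi b.
Proof. exact: rmorphM. Qed.
Lemma phiXn (a : S k p) n : phi (a ^+ n) = phi a ^+ n.
Proof. exact: rmorphXn. Qed.
Lemma phi_prod n (F : 'I_n -> S k p) : phi (\prod_i F i) = \prod_i phi (F i).
Proof. exact: rmorph_prod. Qed.
Lemma phiC (c : k) : phi (c%:MP : S k p) = c%:MP.
Proof. exact: mmapC. Qed.
Lemma phiX (i : 'I_(2 * p)) : phi ('X_i : S k p) = phi_img k i.
Proof. by rewrite /phi mmapX mmap1U. Qed.
Lemma phi0 : phi (0 : S k p) = 0.
Proof. exact: rmorph0. Qed.

Lemma chiD (a b : T k p) : chi (a + b) = chi a + chi b.
Proof. exact: rmorphD. Qed.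
Lemma chiM (a b : T k p) : chi (a * b) = chi a * chi b.
Proof. exact: rmorphM. Qed.
Lemma chiXn (a : T k p) n : chi (a ^+ n) = chi a ^+ n.
Proof. exact: rmorphXn. Qed.
Lemma chi_prod n (F : 'I_n -> T k p) : chi (\prod_i F i) = \prod_i chi (F i).
Proof. exact: rmorph_prod. Qed.
Lemma chiC (c : k) : chi (c%:MP : T k p) = (c%:MP)%:P.
Proof. exact: mmapC. Qed.
Lemma chi0 : chi 0 = 0.
Proof. exact: rmorph0. Qed.

Lemma phi_e i : (0 < i <= 2 * p)%N -> phi (e k p i) =
  if (i < p)%N then u k p i else if i == p then u k p p + alpha k p
  else u k p (i - p) * alpha k p.
Proof.
move=> /andP[i0 ip].
have H : (i.-1 < 2 * p)%N by rewrite prednK.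
rewrite /e (@var1E _ _ _ H) phiX /phi_img /= prednK //.
Qed.

Definition ph := mmap (@mpolyC _ k) (@phi_img k p).

Lemma ph_e i : (0 < i <= 2 * p)%N -> mmap (@mpolyC _ k) (@phi_img k p) (e k p i) =
  if (i < p)%N then u k p i else if i == p then u k p p + alpha k p
  else u k p (i - p) * alpha k p.
Proof. exact: phi_e. Qed.

Lemma famroot (i : 'I_p) : (map_poly ph (fam k i)).[- alpha k p] = 0.
Proof.
rewrite /fam; case: eqP => [i0|/eqP i0].
  rewrite /f0 !rmorphD /= map_polyXn rmorphM /= map_polyX !map_polyC /=.
  rewrite !hornerE.
  have p0 : (0 < p)%N by apply: leq_trans hp.
  rewrite !ph_e; last first.
  - by rewrite p0 leq_pmull.
  - by rewrite muln_gt0 p0 /=.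
  have h1 : (2 * p < p)%N = false by apply/negbTE; rewrite -leqNgt; lia.
  have h2 : ((2 * p)%N == p) = false by apply/negbTE/eqP; lia.
  have h3 : (2 * p - p = p)%N by lia.
  rewrite ltnn eqxx h1 h2 h3; ring.
rewrite /fi rmorphD /= rmorphM /= map_polyX !map_polyC /=.
rewrite !hornerE.
have Hi := ltn_ord i.
have i0' : (0 < i)%N by rewrite lt0n.
rewrite !ph_e; first last.
- by apply/andP; split; lia.
- by apply/andP; split; lia.
have h1 : (p + i < p)%N = false by apply/negbTE; rewrite -leqNgt; lia.
have h2 : ((p + i)%N == p) = false by apply/negbTE/eqP; lia.
have h3 : (p + i - p = i)%N by lia.
rewrite Hi h1 h2 h3; ring.
Qed.

Lemma main1 (g : S k p) : inI g -> phi g = 0.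
Proof.
move=> [c E].
have := congr1 (fun q => (map_poly ph q).[- alpha k p]) E.
rewrite /= map_polyC hornerC => H; apply: (etrans H).
rewrite rmorph_sum horner_sum big1 // => i _.
by rewrite rmorphM hornerM famroot mulr0.
Qed.

Lemma main2 (g : S k p) : cong g%:P (chi (phi g)).
Proof.
elim/mpolyind: g => [|c m q _ _ IH].
  by rewrite phi0 chi0 /cong subrr; apply: inJ0.
rewrite polyCD phiD chiD; apply: congD; last exact: IH.
have -> : c *: 'X_[m] = c%:MP * \prod_(i < 2 * p) ('X_i : S k p) ^+ m i.
  by rewrite mul_mpolyC mpolyXE_id.
rewrite polyCM phiM chiM phiC chiC; apply: congM.
  by rewrite /cong subrr; apply: inJ0.
rewrite phi_prod chi_prod rmorph_prod; apply: cong_prod => i.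
rewrite phiXn chiXn rmorphXn; apply: congX; rewrite phiX.
have := key i; rewrite /cong => h; rewrite -opprB; exact: inJN.
Qed.

End X.


Theorem proposition6p2 (k : fieldType) (p : nat) (hp : (3 <= p)%N) :
  forall g : S k p, inI g <-> phi g = 0.
Proof.
move=> g; split; first exact: (@main1 k p hp g).
move=> h; have := (@main2 k p hp g); rewrite h (@chi0 k p) /cong subr0 => -[c E].
by exists c.
Qed.
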